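(* Let $A,B\subseteq\mathbb{N}$ with $A\cap B=\emptyset$ such that $\lim_{n\to\infty}\frac{B(n)-A(n)}{n}$ exists and is $>0$. Then there is a subset $D\subseteq B$ with $\lim_{n\to\infty}\frac{D(n)-A(n)}{n}=0$. In particular, $B\setminus D\in\mathcal{D}$.
   Context: $\mathbb{N}=\{1,2,3,\dots\}$. For $A\subseteq\mathbb{N}$ let $A(n)=|A\cap[1,n]|$. Let $\mathcal{D}$ be the collection of all $A\subseteq\mathbb{N}$ for which the asymptotic density $d(A)=\lim_{n\to\infty}\frac{A(n)}{n}$ exists. *)

(* Defs.v *)
From Stdlib Require Import Reals Lra Lia Arith.
From Coquelicot Require Import Coquelicot.

(* A subset of N = {1,2,3,...} is represented by its indicator function
   nat -> bool; the value at 0 is irrelevant (0 is not in N). *)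

Fixpoint cnt (A : nat -> bool) (n : nat) : nat :=
  match n with
  | O => O
  | S m => (cnt A m + (if A (S m) then 1 else 0))%nat
  end.

Definition has_density (A : nat -> bool) : Prop :=
  exists d : R, is_lim_seq (fun n => INR (cnt A n) / INR n) d.

(* Main.v *)
Require Import Defs.
From Stdlib Require Import Reals Lra Lia Arith ZArith.
From Coquelicot Require Import Coquelicot.

Lemma arch_nat (x : R) : exists M : nat, x < INR M.
Proof.
  destruct (archimed x) as [H _].
  exists (Z.abs_nat (up x)).
  rewrite INR_IZR_INZ, Nat2Z.inj_abs_nat.
  assert (IZR (up x) <= IZR (Z.abs (up x))) by (apply IZR_le; lia). lra.
Qed.

Lemma cnt_le (B : nat -> bool) n : (cnt B n <= n)%nat.
Proof. induction n; simpl; [lia|destruct (B (S n)); lia]. Qed.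

Fixpoint gap (A B : nat -> bool) (n : nat) : nat :=
  match n with
  | O => O
  | S m => if A (S m) then S (gap A B m)
           else if B (S m) then pred (gap A B m) else gap A B m
  end.

Definition Dset (A B : nat -> bool) (n : nat) : bool :=
  match n with
  | O => false
  | S m => andb (B (S m)) (Nat.ltb 0 (gap A B m))
  end.

Section S.
Variables A B : nat -> bool.
Hypothesis disj : forall n : nat, (1 <= n)%nat -> A n = true -> B n = false.

Lemma inv n : cnt A n = (cnt (Dset A B) n + gap A B n)%nat.
Proof.
  induction n; [reflexivity|].
  cbn [cnt gap]. change (Dset A B (S n)) with (andb (B (S n)) (Nat.ltb 0 (gap A B n))).
  destruct (A (S n)) eqn:HA.
  - rewrite (disj (S n)) by (lia || auto). simpl. rewrite IHn. lia.
  - destruct (B (S n)); simpl; [|lia].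
    destruct (gap A B n) eqn:G; simpl; rewrite IHn; lia.
Qed.

Definition h n := INR (cnt A n) - INR (cnt B n).

Lemma gap_repr n : exists m, (m <= n)%nat /\ INR (gap A B n) = h n - h m.
Proof.
  induction n.
  - exists 0%nat. split; [lia|]. simpl. unfold h. lra.
  - destruct IHn as [m [Hm E]].
    unfold h in *. simpl cnt. simpl gap.
    destruct (A (S n)) eqn:HA.
    + rewrite (disj (S n)) by (lia || auto).
      exists m; split; [lia|]. rewrite !plus_INR, S_INR. simpl (INR 1). simpl (INR 0). lra.
    + destruct (B (S n)) eqn:HB.
      * destruct (gap A B n) eqn:G.
        -- exists (S n). split; [lia|]. simpl. rewrite HA, HB. lra.
        -- exists m; split; [lia|]. simpl pred. rewrite S_INR in E.
           rewrite !plus_INR. simpl (INR 1). simpl (INR 0). lra.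
      * exists m; split; [lia|]. rewrite !plus_INR. simpl (INR 0). lra.
Qed.

Lemma gap_lim l : l > 0 ->
  is_lim_seq (fun n => ((INR (cnt B n) - INR (cnt A n)) / INR n)%R) l ->
  is_lim_seq (fun n => INR (gap A B n) / INR n) 0.
Proof.
  intros Hl HL.
  apply is_lim_seq_spec in HL. apply is_lim_seq_spec.
  intro eps.
  assert (He3 : 0 < eps / 3) by (destruct eps; simpl; lra).
  destruct (HL (mkposreal _ He3)) as [N0 HN0]. simpl in HN0.
  set (N := S N0).
  assert (bnd : forall n, (N <= n)%nat ->
     -(l + eps/3) * INR n < h n < (eps/3 - l) * INR n).
  { intros n Hn.
    assert (Hpos : 0 < INR n) by (apply lt_0_INR; unfold N in Hn; lia).
    specialize (HN0 n ltac:(unfold N in Hn; lia)).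
    apply Rabs_def2 in HN0.
    set (q := (INR (cnt B n) - INR (cnt A n)) / INR n) in HN0.
    assert (q * INR n = INR (cnt B n) - INR (cnt A n)) by (unfold q; field; lra).
    unfold h. nra. }
  destruct (arch_nat (INR N / (eps/3))) as [M HM].
  exists (max N (S M)). intros n Hn.
  assert (HnN : (N <= n)%nat) by lia.
  assert (Hpos : 0 < INR n) by (apply lt_0_INR; unfold N in HnN; lia).
  assert (HMn : INR M <= INR n) by (apply le_INR; lia).
  destruct (gap_repr n) as [m [Hmn E]].
  assert (HG : INR (gap A B n) <= 2 * (eps/3) * INR n + INR N).
  { rewrite E. destruct (le_lt_dec N m) as [Hm|Hm].
    - pose proof (bnd n HnN). pose proof (bnd m Hm).
      assert (INR m <= INR n) by (apply le_INR; lia).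
      assert (0 <= INR N) by apply pos_INR.
      nra.
    - pose proof (bnd n HnN).
      assert (h m >= - INR N).
      { unfold h. pose proof (cnt_le B m). assert (INR (cnt B m) <= INR N) by (apply le_INR; lia).
        pose proof (pos_INR (cnt A m)). lra. }
      nra. }
  assert (HN' : INR N < eps/3 * INR n).
  { apply (Rmult_lt_compat_l (eps/3)) in HM; [|lra].
    replace (eps / 3 * (INR N / (eps / 3))) with (INR N) in HM by (field; lra). nra. }
  pose proof (pos_INR (gap A B n)).
  rewrite Rminus_0_r, Rabs_pos_eq.
  - apply Rmult_lt_reg_r with (INR n); [lra|].
    unfold Rdiv. rewrite Rmult_assoc, Rinv_l by lra. nra.
  - apply Rdiv_le_0_compat; lra.
Qed.

End S.

Lemma cnt_split (B D : nat -> bool) n : (forall k, D k = true -> B k = true) ->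
  (cnt (fun k => andb (B k) (negb (D k))) n + cnt D n = cnt B n)%nat.
Proof.
  intros HD. induction n; simpl; [reflexivity|].
  destruct (D (S n)) eqn:E; [rewrite (HD _ E)|]; destruct (B (S n)); simpl; lia.
Qed.

Theorem lemma3p5 (A B : nat -> bool) :
  (forall n : nat, (1 <= n)%nat -> A n = true -> B n = false) ->
  (exists l : R, (l > 0)%R /\
     is_lim_seq (fun n => ((INR (cnt B n) - INR (cnt A n)) / INR n)%R) l) ->
  exists D : nat -> bool,
    (forall n : nat, D n = true -> B n = true) /\
    is_lim_seq (fun n => ((INR (cnt D n) - INR (cnt A n)) / INR n)%R) 0%R /\
    has_density (fun n => andb (B n) (negb (D n))).
Proof.
  intros disj [l [Hl HL]].
  assert (HDB : forall n, Dset A B n = true -> B n = true).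
  { intros [|n]; simpl; [discriminate|]. intro H. apply andb_prop in H. tauto. }
  assert (G := gap_lim A B disj l Hl HL).
  assert (L0 : is_lim_seq (fun n => ((INR (cnt (Dset A B) n) - INR (cnt A n)) / INR n)%R) 0%R).
  { apply is_lim_seq_ext with (fun n => - (INR (gap A B n) / INR n)).
    - intro n. rewrite (inv A B disj n), plus_INR. unfold Rdiv. ring.
    - replace (Finite 0) with (Rbar_opp 0) by (simpl; f_equal; ring).
      apply -> is_lim_seq_opp. exact G. }
  exists (Dset A B). split; [exact HDB|]. split; [exact L0|].
  exists (l - 0). 
  apply is_lim_seq_ext with
    (fun n => ((INR (cnt B n) - INR (cnt A n)) / INR n) - ((INR (cnt (Dset A B) n) - INR (cnt A n)) / INR n)).
  - intro n. rewrite <- (cnt_split B (Dset A B) n HDB), plus_INR. unfold Rdiv. ring.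
  - apply is_lim_seq_minus'; assumption.
Qed.
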